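(* Assume the block-sparse setting described in the context, with adversarial noise satisfying $\|w\|_2\le\varepsilon$ for a known constant $\varepsilon>0$, and assume $x\neq 0$. Suppose that $$(1-(d-1)\nu)\,x_{\min} > 2\varepsilon\sqrt{1+(d-1)\nu} + (2k-1)\,d\,\mu_B\,x_{\min}.$$ Then the BOMP algorithm selects all elements of $S=\mathrm{supp}(x)$ among its chosen indices $\{i_1,\dots,i_k\}$, and its output satisfies $$\|\hat x_{\mathrm{BOMP}}-x\|_2^2 \le \frac{\varepsilon^2}{1-(d-1)\nu-(k-1)d\mu_B}.$$
   Context: Setting: $N=Md$. For $v\in\mathbb{C}^N$, $v[i]=(v_{(i-1)d+1},\dots,v_{id})^T$ is its $i$-th block ($1\le i\le M$); for a matrix $A$ with $N$ columns, $A[i]$ is the submatrix of columns $(i-1)d+1,\dots,id$. The (block) support is $\mathrm{supp}(v)=\{i: v[i]\neq 0\}$. For an index set $I=\{i_1<\dots<i_p\}$, $v_I$ is the concatenation of the blocks $v[i_1],\dots,v[i_p]$ and $A_I=[A[i_1],\dots,A[i_p]]$. The unknown deterministic vector $x\in\mathbb{C}^N$ has at most $k$ nonzero blocks (with $k$ known); $S=\mathrm{supp}(x)$, $s=|S|$, $x_{\max}=\max_{i\in S}\|x[i]\|_2$, $x_{\min}=\min_{i\in S}\|x[i]\|_2$. Observations are $y=Dx+w$ where $D\in\mathbb{C}^{L\times N}$ is known with columns $d_1,\dots,d_N$ of unit $\ell_2$ norm, $L<N$, and $D_I$ has full column rank for every index set $I$ with $|I|\le k$. Block coherence: $\mu_B=\max_{i\neq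 j}\frac1d\|D[i]^*D[j]\|$ (spectral norm). Sub-coherence: $\nu=\max_{1\le \ell\le M}\max_{(\ell-1)d+1\le i\neq j\le \ell d}|d_i^*d_j|$. BOMP algorithm: set $r^0=y$. For $\ell=1,\dots,k$: choose $i_\ell\in\arg\max_{i}\|D[i]^*r^{\ell-1}\|_2$ (ties broken arbitrarily); let $x^\ell$ be a minimizer of $\|y-D\tilde x\|_2$ over $\tilde x$ with $\mathrm{supp}(\tilde x)\subseteq\{i_1,\dots,i_\ell\}$; set $r^\ell=y-Dx^\ell$. Output $\hat x_{\mathrm{BOMP}}=x^k$. *)

(* Defs.v *)
(* The complex field is abstracted as any
   C : numClosedFieldType (algebraically closed field with conjugation
   and order/norm, e.g. algC). *)
From HB Require Import structures.
From mathcomp Require Import all_boot all_order all_algebra all_field.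
Set Implicit Arguments. Unset Strict Implicit. Unset Printing Implicit Defensive.
Import Order.TTheory GRing.Theory Num.Theory.
Local Open Scope ring_scope.

Definition adj (C : numClosedFieldType) m n (A : 'M[C]_(m, n)) : 'M[C]_(n, m) :=
  (map_mx (fun z => z^*) A)^T.

Definition norm2sq (C : numClosedFieldType) n (v : 'cV[C]_n) : C :=
  \sum_(j < n) `|v j 0| ^+ 2.
Definition norm2 (C : numClosedFieldType) n (v : 'cV[C]_n) : C :=
  sqrtC (norm2sq v).

(* A vector of C^N, N = M d, is represented by its M blocks of size d;
   the dictionary D (L x N) by its M column blocks D[i] (L x d). *)
Definition bvec (C : numClosedFieldType) M d := 'I_M -> 'cV[C]_d.
Definition bdict (C : numClosedFieldType) L M d := 'I_M -> 'M[C]_(L, d).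

Definition bmul (C : numClosedFieldType) L M d (D : bdict C L M d)
  (x : bvec C M d) : 'cV[C]_L := \sum_(i < M) D i *m x i.

Definition bsub (C : numClosedFieldType) M d (x z : bvec C M d) : bvec C M d :=
  fun i => x i - z i.

Definition bsupp (C : numClosedFieldType) M d (x : bvec C M d) : {set 'I_M} :=
  [set i | x i != 0].

Definition bnorm2sq (C : numClosedFieldType) M d (x : bvec C M d) : C :=
  \sum_(i < M) norm2sq (x i).

Definition is_spec_norm (C : numClosedFieldType) m n (A : 'M[C]_(m, n)) (s : C) :=
  (forall v : 'cV[C]_n, norm2 (A *m v) <= s * norm2 v) /\
  (exists v : 'cV[C]_n, norm2 v = 1 /\ norm2 (A *m v) = s).

Definition is_block_coherence (C : numClosedFieldType) L M d
  (D : bdict C L M d) (mu : C) :=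
  exists sn : 'I_M -> 'I_M -> C,
    (forall i j, is_spec_norm (adj (D i) *m D j) (sn i j)) /\
    mu = \big[Num.max/0]_(i < M) \big[Num.max/0]_(j < M | i != j) (sn i j / d%:R).

(* sub-coherence: max over blocks l and distinct columns i <> j of block l
   of |d_i^* d_j| (0 if there is no such pair) *)
Definition subcoherence (C : numClosedFieldType) L M d (D : bdict C L M d) : C :=
  \big[Num.max/0]_(l < M) \big[Num.max/0]_(i < d) \big[Num.max/0]_(j < d | i != j)
     `|(adj (col i (D l)) *m col j (D l)) 0 0|.

Definition is_min_block_norm (C : numClosedFieldType) M d (x : bvec C M d) (xmin : C) :=
  (exists2 i, i \in bsupp x & xmin = norm2 (x i)) /\
  (forall i, i \in bsupp x -> xmin <= norm2 (x i)).

Definition chosen M (sel : nat -> 'I_M) (l : nat) : {set 'I_M} :=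
  [set i | has (fun j => sel j == i) (iota 0 l)].

(* A run of BOMP for k iterations on data (D, y): sel l is the index i_{l+1}
   chosen at iteration l+1, xs l is the iterate x^l (xs 0 = 0, so r^0 = y),
   residual r^l = y - D x^l.  Ties and non-unique least-squares minimizers
   are allowed arbitrarily.  The output is xs k. *)
Definition BOMP_run (C : numClosedFieldType) L M d (D : bdict C L M d)
  (y : 'cV[C]_L) (k : nat) (sel : nat -> 'I_M) (xs : nat -> bvec C M d) :=
  (forall i, xs 0%N i = 0) /\
  forall l, (l < k)%N ->
    let r := y - bmul D (xs l) in
    (forall i, norm2 (adj (D i) *m r) <= norm2 (adj (D (sel l)) *m r)) /\
    bsupp (xs l.+1) \subset chosen sel l.+1 /\
    (forall z : bvec C M d, bsupp z \subset chosen sel l.+1 ->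
       norm2 (y - bmul D (xs l.+1)) <= norm2 (y - bmul D z)).

(* Main.v *)
Require Import Defs.
From HB Require Import structures.
From mathcomp Require Import all_boot all_order all_algebra all_field.
Import Order.TTheory GRing.Theory Num.Theory.
Local Open Scope ring_scope.
Set Implicit Arguments. Unset Strict Implicit. Unset Printing Implicit Defensive.

Section Dot.
Variable C : numClosedFieldType.

Definition dot n (a b : 'cV[C]_n) : C := \sum_(j < n) (a j 0)^* * b j 0.

Lemma adjE m n (A : 'M[C]_(m, n)) i j : adj A i j = (A j i)^*.
Proof. by rewrite /adj !mxE. Qed.

Lemma dotE n (a b : 'cV[C]_n) : (adj a *m b) 0 0 = dot a b.
Proof. by rewrite mxE; apply: eq_bigr => j _; rewrite adjE. Qed.

Lemma dotnn n (a : 'cV[C]_n) : dot a a = norm2sq a.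
Proof. by apply: eq_bigr => j _; rewrite normCKC. Qed.

Lemma norm2sq_ge0 n (a : 'cV[C]_n) : 0 <= norm2sq a.
Proof. by apply: sumr_ge0 => j _; rewrite exprn_ge0. Qed.

Lemma norm2_ge0 n (a : 'cV[C]_n) : 0 <= norm2 a.
Proof. by rewrite /norm2 sqrtC_ge0 norm2sq_ge0. Qed.

Lemma norm2_sq n (a : 'cV[C]_n) : norm2 a ^+ 2 = norm2sq a.
Proof. by rewrite /norm2 sqrtCK. Qed.

Lemma norm2sq_eq0 n (a : 'cV[C]_n) : norm2sq a = 0 -> a = 0.
Proof.
move=> /eqP; rewrite psumr_eq0 => [/allP H|j _]; last by rewrite exprn_ge0.
apply/matrixP=> i j; rewrite ord1 mxE; apply/eqP.
by have := H i (mem_index_enum _); rewrite /= expf_eq0 /= normr_eq0.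
Qed.

Lemma norm2_eq0 n (a : 'cV[C]_n) : norm2 a = 0 -> a = 0.
Proof. by move=> /eqP; rewrite /norm2 sqrtC_eq0 => /eqP /norm2sq_eq0. Qed.

Lemma norm2_0 n : norm2 (0 : 'cV[C]_n) = 0.
Proof. by rewrite /norm2 /norm2sq big1 ?sqrtC0 // => j _; rewrite mxE normr0 expr0n. Qed.

Lemma dotDr n (a b c : 'cV[C]_n) : dot a (b + c) = dot a b + dot a c.
Proof. by rewrite /dot -big_split; apply: eq_bigr => j _; rewrite mxE mulrDr. Qed.

Lemma dotZr n (a b : 'cV[C]_n) t : dot a (t *: b) = t * dot a b.
Proof. by rewrite /dot mulr_sumr; apply: eq_bigr => j _; rewrite mxE mulrCA. Qed.

Lemma dot_sumr n I (r : seq I) (P : pred I) (a : 'cV[C]_n) (F : I -> 'cV[C]_n) :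
  dot a (\sum_(i <- r | P i) F i) = \sum_(i <- r | P i) dot a (F i).
Proof.
rewrite /dot exchange_big /=; apply: eq_bigr => j _.
by rewrite summxE mulr_sumr.
Qed.

Lemma dotC n (a b : 'cV[C]_n) : dot b a = (dot a b)^*.
Proof.
rewrite /dot rmorph_sum; apply: eq_bigr => j _.
by rewrite rmorphM /= conjCK mulrC.
Qed.

Lemma dotDl n (a b c : 'cV[C]_n) : dot (b + c) a = dot b a + dot c a.
Proof. by rewrite dotC dotDr rmorphD /= -!dotC. Qed.

Lemma dotZl n (a b : 'cV[C]_n) t : dot (t *: b) a = t^* * dot b a.
Proof. by rewrite dotC dotZr rmorphM /= -dotC. Qed.

Lemma dot_suml n I (r : seq I) (P : pred I) (a : 'cV[C]_n) (F : I -> 'cV[C]_n) :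
  dot (\sum_(i <- r | P i) F i) a = \sum_(i <- r | P i) dot (F i) a.
Proof. by rewrite dotC dot_sumr rmorph_sum; apply: eq_bigr => i _; rewrite /= -dotC. Qed.

Lemma dot_adj m n (A : 'M[C]_(m, n)) a b : dot a (adj A *m b) = dot (A *m a) b.
Proof.
rewrite /dot.
under eq_bigr => j _ do rewrite mxE mulr_sumr.
rewrite exchange_big /=; apply: eq_bigr => i _.
rewrite mxE rmorph_sum mulr_suml; apply: eq_bigr => j _.
by rewrite adjE rmorphM /= mulrCA mulrA.
Qed.

Lemma dot_adj2 m n (A : 'M[C]_(m, n)) a b : dot (adj A *m a) b = dot a (A *m b).
Proof. by rewrite dotC dot_adj -dotC. Qed.

End Dot.

Section CS.
Variable C : numClosedFieldType.

Lemma amgm (a b : C) : 0 <= a -> 0 <= b -> (a * b) *+ 2 <= a ^+ 2 + b ^+ 2.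
Proof.
move=> ha hb.
have hr : a - b \is Num.real by rewrite rpredB ?ger0_real.
rewrite -subr_ge0 addrAC -sqrrB -real_normK //.
by rewrite exprn_ge0.
Qed.

Lemma realCS (I : finType) (p q : I -> C) :
  (forall i, 0 <= p i) -> (forall i, 0 <= q i) ->
  (\sum_i p i * q i) ^+ 2 <= (\sum_i p i ^+ 2) * (\sum_i q i ^+ 2).
Proof.
move=> hp hq.
rewrite expr2 mulr_suml [X in _ <= X]mulr_suml.
rewrite -(ler_pMn2r (n:=2)) // -!sumrMnl.
under eq_bigr => i _ do rewrite mulr_sumr.
rewrite [X in _ <= X](eq_bigr (fun i => (\sum_j p i ^+ 2 * q j ^+ 2) *+ 2)); last by move=> i _; rewrite mulr_sumr.
have -> : \sum_i (\sum_j p i ^+ 2 * q j ^+ 2) *+ 2 =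
   \sum_i \sum_j (p i * q j) ^+ 2 + \sum_i \sum_j (p j * q i) ^+ 2.
  rewrite [X in _ = _ + X]exchange_big /= -big_split /=.
  apply: eq_bigr => i _; rewrite -big_split /= -sumrMnl; apply: eq_bigr => j _.
  by rewrite !exprMn mulr2n.
rewrite -big_split /=; apply: ler_sum => i _.
rewrite -sumrMnl -big_split /=; apply: ler_sum => j _.
have -> : p i * q i * (p j * q j) = (p i * q j) * (p j * q i).
  by rewrite mulrACA [RHS]mulrACA (mulrC (q j)).
by apply: amgm; rewrite mulr_ge0.
Qed.

Lemma CSdot n (a b : 'cV[C]_n) : `|dot a b| <= norm2 a * norm2 b.
Proof.
have h1 : `|dot a b| <= \sum_j `|a j 0| * `|b j 0|.
  by apply: le_trans (ler_norm_sum _ _ _) _; apply: ler_sum => j _; rewrite normrM norm_conjC.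
have h0 : 0 <= \sum_j `|a j 0| * `|b j 0| by apply: sumr_ge0 => j _; rewrite mulr_ge0.
apply: le_trans h1 _.
rewrite -ler_sqr ?nnegrE ?mulr_ge0 ?norm2_ge0 //.
by rewrite exprMn !norm2_sq; apply: realCS.
Qed.

End CS.

Section Max.
Variable C : numClosedFieldType.

Lemma max_ge (a b : C) : 0 <= a -> 0 <= b ->
  [/\ 0 <= Num.max a b, a <= Num.max a b & b <= Num.max a b].
Proof.
move=> ha hb; rewrite /Order.max; case: ifP => h.
  by split => //; exact: ltW.
split => //; have := ger_leVge ha hb; case/orP => // hab.
by rewrite lt_neqAle hab andbT in h; move/negbFE: h => /eqP ->.
Qed.

Lemma bigmax_ge (I : finType) (P : pred I) (F : I -> C) :
  (forall i, P i -> 0 <= F i) ->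
  0 <= \big[Num.max/0]_(i | P i) F i /\
  forall i, P i -> F i <= \big[Num.max/0]_(i | P i) F i.
Proof.
move=> hF.
suff H : forall r : seq I, 0 <= \big[Num.max/0]_(i <- r | P i) F i /\
  forall i, i \in r -> P i -> F i <= \big[Num.max/0]_(i <- r | P i) F i.
  by have [h1 h2] := H (index_enum I); split => // i; apply: h2; rewrite mem_index_enum.
elim=> [|j r [IH1 IH2]]; first by rewrite big_nil.
rewrite big_cons; case: ifP => hj.
  have [m0 m1 m2] := max_ge (hF j hj) IH1.
  split => // i; rewrite in_cons => /orP [/eqP -> //|hi] Pi.
  exact: le_trans (IH2 i hi Pi) m2.
split => // i; rewrite in_cons => /orP [/eqP ->|hi] Pi; first by rewrite hj in Pi.
exact: IH2.
Qed.

Lemma argmax_seq (I : eqType) (f : I -> C) (s : seq I) :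
  (forall i, 0 <= f i) -> s != [::] ->
  exists2 a, a \in s & forall b, b \in s -> f b <= f a.
Proof.
move=> hf; elim: s => [//|j s IH] _.
case: s IH => [|j' s] IH.
  by exists j; rewrite ?inE // => b; rewrite inE => /eqP ->.
have [//|a ha hb] := IH.
case/orP: (ger_leVge (hf j) (hf a)) => hja.
  exists a; first by rewrite inE ha orbT.
  by move=> b; rewrite inE => /orP [/eqP ->|/hb].
exists j; first by rewrite inE eqxx.
by move=> b; rewrite inE => /orP [/eqP ->//|/hb hba]; apply: le_trans hba hja.
Qed.

Lemma argmax (I : finType) (A : {set I}) (f : I -> C) (i0 : I) :
  i0 \in A -> (forall i, 0 <= f i) ->
  exists2 a, a \in A & forall b, b \in A -> f b <= f a.
Proof.
move=> hi0 hf.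
have [|a ha hb] := argmax_seq (s := enum A) hf.
  by apply/eqP => e; have := mem_enum A i0; rewrite e hi0.
exists a; first by rewrite -mem_enum.
by move=> b hbA; apply: hb; rewrite mem_enum.
Qed.

Lemma offdiag (I : finType) (A : {set I}) (p : I -> C) :
  (forall i, 0 <= p i) -> (forall i, i \notin A -> p i = 0) ->
  \sum_i \sum_(j | j != i) p i * p j <= (#|A|%:R - 1) * \sum_i p i ^+ 2.
Proof.
move=> hp hA.
have e1 : \sum_i \sum_(j | j != i) p i * p j = (\sum_i p i) ^+ 2 - \sum_i p i ^+ 2.
  rewrite expr2 mulr_suml -sumrB; apply: eq_bigr => i _.
  by rewrite mulr_sumr [X in _ = X - _](bigD1 i) //= -expr2 addrC addrK.
rewrite e1 mulrBl mul1r lerD2r.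
have := realCS (p := p) (q := fun i => (i \in A)%:R) hp (fun i => ler0n _ _).
have -> : \sum_i p i * (i \in A)%:R = \sum_i p i.
  apply: eq_bigr => i _; case: (boolP (i \in A)) => h. rewrite mulr1n mulr1 //. rewrite mulr0n mulr0 hA //.
have -> : \sum_i ((i \in A)%:R) ^+ 2 = #|A|%:R :> C.
  rewrite (eq_bigr (fun i => (i \in A)%:R)); last first.
    by move=> i _; case: (i \in A); rewrite ?mulr1n ?mulr0n ?expr1n ?expr0n.
  rewrite (bigID (mem A)) /= [X in _ + X]big1 ?addr0 => [|i /negbTE ->//].
  by rewrite (eq_bigr (fun _ => 1)) => [|i ->//]; rewrite sumr_const.
by rewrite mulrC.
Qed.

End Max.

Section Gersh.
Variable C : numClosedFieldType.

Lemma adjmulE L d (A : 'M[C]_(L, d)) a b : (adj A *m A) a b = dot (col a A) (col b A).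
Proof. by rewrite mxE; apply: eq_bigr => i _; rewrite adjE !mxE. Qed.

Lemma gersh1 L d (Dl : 'M[C]_(L, d)) (nu : C) (v : 'cV[C]_d) :
  (forall a, norm2sq (col a Dl) = 1) ->
  (forall a b, a != b -> `|dot (col a Dl) (col b Dl)| <= nu) -> 0 <= nu ->
  `|norm2sq (Dl *m v) - norm2sq v| <= (d%:R - 1) * nu * norm2sq v.
Proof.
move=> h1 h2 hnu.
have e : norm2sq (Dl *m v) = \sum_a \sum_b (v a 0)^* * (dot (col a Dl) (col b Dl)) * v b 0.
  rewrite -dotnn -dot_adj mulmxA /dot; apply: eq_bigr => a _.
  rewrite mxE mulr_sumr; apply: eq_bigr => b _.
  by rewrite adjmulE mulrA.
have e2 : norm2sq (Dl *m v) - norm2sq v =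
   \sum_a \sum_(b | b != a) (v a 0)^* * (dot (col a Dl) (col b Dl)) * v b 0.
  rewrite e /norm2sq -sumrB; apply: eq_bigr => a _.
  rewrite (bigD1 a) //= dotnn h1 mulr1 normCKC addrC addrK //.
rewrite e2.
apply: le_trans (ler_norm_sum _ _ _) _.
have hb : \sum_a `|\sum_(b | b != a) (v a 0)^* * (dot (col a Dl) (col b Dl)) * v b 0|
    <= nu * \sum_a \sum_(b | b != a) `|v a 0| * `|v b 0|.
  rewrite mulr_sumr; apply: ler_sum => a _.
  apply: le_trans (ler_norm_sum _ _ _) _.
  rewrite mulr_sumr; apply: ler_sum => b hb.
  rewrite !normrM norm_conjC mulrAC [X in _ <= X]mulrC.

  apply: ler_wpM2l; first by rewrite mulr_ge0.
  by apply: h2; rewrite eq_sym.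
apply: le_trans hb _.
rewrite [X in _ <= X]mulrAC [X in _ <= X]mulrC; apply: ler_wpM2l => //.
have := offdiag (A := [set: 'I_d]) (p := fun a => `|v a 0|) (fun _ => normr_ge0 _) (fun i => ltac:(by rewrite inE)).
by rewrite cardsT card_ord.
Qed.

End Gersh.

Section LS.
Variable C : numClosedFieldType.

Lemma LSorth n (r a : 'cV[C]_n) :
  (forall t : C, norm2 r <= norm2 (r + t *: a)) -> dot a r = 0.
Proof.
move=> h.
have h2 : forall t : C, norm2sq r <= norm2sq (r + t *: a).
  move=> t; rewrite -!norm2_sq ler_sqr ?nnegrE ?norm2_ge0 //.
have [a0|anz] := eqVneq a 0; first by rewrite a0 /dot big1 // => j _; rewrite mxE rmorph0 mul0r.
have na_gt0 : 0 < norm2sq a.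
  rewrite lt_def norm2sq_ge0 andbT; apply/eqP => /norm2sq_eq0 e; by rewrite e eqxx in anz.
set c := dot a r.
have := h2 (- (c / norm2sq a)).
rewrite -!dotnn dotDl !dotDr !dotZl !dotZr (dotC a r) -/c.
set na := dot a a.
have hna : na = norm2sq a by rewrite /na dotnn.
have cna : na^* = na by rewrite hna geC0_conj // norm2sq_ge0.
rewrite !rmorphN /= rmorphM /= fmorphV /= cna.
have nz : na != 0 by rewrite hna; apply: lt0r_neq0.
have e : - (c^* / na) * (- (c / na) * na) = (c^*/na) * c by rewrite (mulNr (c / na)) divfK // mulrNN.
rewrite e (mulNr (c^* / na)) addNr addr0 lerDl mulNr oppr_ge0 mulrAC -normCK => hle.
have hge : 0 <= `|c| ^+ 2 / na by rewrite divr_ge0 // ?exprn_ge0 // hna norm2sq_ge0.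
have := le_anti (introT andP (conj hle hge)) => /eqP; rewrite mulf_eq0 invr_eq0 (negbTE nz) orbF.
by rewrite expf_eq0 /= normr_eq0 => /eqP.
Qed.

End LS.

Section Basic.
Variable C : numClosedFieldType.
Variables (L M d : nat) (D : bdict C L M d).

Lemma bmulD (a b : bvec C M d) : bmul D (fun i => a i + b i) = bmul D a + bmul D b.
Proof. by rewrite /bmul -big_split; apply: eq_bigr => i _; rewrite mulmxDr. Qed.

Lemma bmulB (a b : bvec C M d) : bmul D (fun i => a i - b i) = bmul D a - bmul D b.
Proof. by rewrite /bmul -sumrB; apply: eq_bigr => i _; rewrite mulmxBr. Qed.

Lemma bmulZ (a : bvec C M d) t : bmul D (fun i => t *: a i) = t *: bmul D a.
Proof. by rewrite /bmul scaler_sumr; apply: eq_bigr => i _; rewrite scalemxAr. Qed.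

Lemma bmul1 i (v : 'cV[C]_d) : bmul D (fun j => if j == i then v else 0) = D i *m v.
Proof.
rewrite /bmul (bigD1 i) //= eqxx big1 ?addr0 // => j /negbTE ->.
by rewrite mulmx0.
Qed.

Lemma chosen0 (sel : nat -> 'I_M) : chosen sel 0 = set0.
Proof. by apply/setP => i; rewrite !inE. Qed.

Lemma chosenS (sel : nat -> 'I_M) l : chosen sel l.+1 = sel l |: chosen sel l.
Proof.
apply/setP => i; rewrite !inE -addn1 iotaD has_cat /= orbF add0n orbC.
by rewrite eq_sym.
Qed.

Lemma chosen_mono (sel : nat -> 'I_M) l m : (l <= m)%N -> chosen sel l \subset chosen sel m.
Proof.
elim: m => [|m IH]; first by rewrite leqn0 => /eqP ->.
rewrite leq_eqVlt => /orP [/eqP ->//|/IH h].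
by apply: subset_trans h _; rewrite chosenS subsetU1.
Qed.

Lemma chosen_card (sel : nat -> 'I_M) l : (#|chosen sel l| <= l)%N.
Proof.
elim: l => [|l IH]; first by rewrite chosen0 cards0.
by rewrite chosenS cardsU1 -add1n; apply: leq_add => //; apply: leq_b1.
Qed.

End Basic.

Section Facts.
Variable C : numClosedFieldType.
Variables (L M d : nat) (D : bdict C L M d) (mu : C).
Hypothesis hd : (0 < d)%N.
Hypothesis hcols : forall (l : 'I_M) (j : 'I_d), norm2 (col j (D l)) = 1.
Hypothesis hmu : is_block_coherence D mu.

Local Notation nu := (subcoherence D).

Lemma nu_facts : 0 <= nu /\ forall l a b, a != b -> `|dot (col a (D l)) (col b (D l))| <= nu.
Proof.
rewrite /subcoherence.
set f := fun l i j => `|(adj (col i (D l)) *m col j (D l)) 0 0|.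
have hinner : forall l i, 0 <= \big[Num.max/0]_(j < d | i != j) f l i j /\
   forall j, i != j -> f l i j <= \big[Num.max/0]_(j < d | i != j) f l i j.
  by move=> l i; apply: bigmax_ge => j _; apply: normr_ge0.
have hmid : forall l, 0 <= \big[Num.max/0]_(i < d) \big[Num.max/0]_(j < d | i != j) f l i j /\
   forall i, \big[Num.max/0]_(j < d | i != j) f l i j <=
      \big[Num.max/0]_(i < d) \big[Num.max/0]_(j < d | i != j) f l i j.
  move=> l; have [] := bigmax_ge (P := xpredT)
     (F := fun i => \big[Num.max/0]_(j < d | i != j) f l i j) (fun i _ => (hinner l i).1).
  by move=> h0 h1; split => // i; apply: h1.
have [o0 o1] := bigmax_ge (P := xpredT)
     (F := fun l => \big[Num.max/0]_(i < d) \big[Num.max/0]_(j < d | i != j) f l i j)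
     (fun l _ => (hmid l).1).
split => // l a b hab.
rewrite -dotE; apply: le_trans ((hinner l a).2 b hab) _.
by apply: le_trans ((hmid l).2 a) _; apply: o1.
Qed.

Lemma cols1 l a : norm2sq (col a (D l)) = 1.
Proof. by rewrite -norm2_sq hcols expr1n. Qed.

Lemma dm1 : (d - 1)%N%:R = d%:R - 1 :> C.
Proof. by rewrite natrB. Qed.

Lemma gersh_D l v : `|norm2sq (D l *m v) - norm2sq v| <= (d - 1)%N%:R * nu * norm2sq v.
Proof.
rewrite dm1; apply: gersh1; [exact: cols1 | exact: nu_facts.2 | exact: nu_facts.1].
Qed.

Lemma gersh_up l v : norm2sq (D l *m v) <= (1 + (d - 1)%N%:R * nu) * norm2sq v.
Proof.
have hr : norm2sq (D l *m v) - norm2sq v \is Num.real by rewrite rpredB ?ger0_real ?norm2sq_ge0.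
have := gersh_D l v; rewrite (real_ler_norml _ hr) => /andP [_].
by rewrite lerBlDr mulrDl mul1r addrC.
Qed.

Lemma gersh_lo l v : (1 - (d - 1)%N%:R * nu) * norm2sq v <= norm2sq (D l *m v).
Proof.
have hr : norm2sq (D l *m v) - norm2sq v \is Num.real by rewrite rpredB ?ger0_real ?norm2sq_ge0.
have := gersh_D l v; rewrite (real_ler_norml _ hr) => /andP [h _].
rewrite mulrBl mul1r -subr_ge0; rewrite -subr_ge0 in h.
by rewrite opprB addrA addrAC; move: h; rewrite opprK.
Qed.

Lemma nn_ge0 : 0 <= 1 + (d - 1)%N%:R * nu.
Proof. by rewrite addr_ge0 // mulr_ge0 // nu_facts.1. Qed.

Lemma norm_up l v : norm2 (D l *m v) <= sqrtC (1 + (d - 1)%N%:R * nu) * norm2 v.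
Proof.
rewrite -ler_sqr ?nnegrE ?mulr_ge0 ?norm2_ge0 ?sqrtC_ge0 ?nn_ge0 //.
by rewrite exprMn !norm2_sq sqrtCK; apply: gersh_up.
Qed.

Lemma mu_facts : 0 <= mu /\ forall i j, i != j -> forall v,
  norm2 (adj (D i) *m (D j *m v)) <= d%:R * mu * norm2 v.
Proof.
have [sn [hsn ->]] := hmu.
have sn0 : forall i j, 0 <= sn i j.
  by move=> i j; have [_ [v [_ <-]]] := hsn i j; apply: norm2_ge0.
have dpos : 0 < d%:R :> C by rewrite ltr0n.
have hinner : forall i, 0 <= \big[Num.max/0]_(j < M | i != j) (sn i j / d%:R) /\
   forall j, i != j -> sn i j / d%:R <= \big[Num.max/0]_(j < M | i != j) (sn i j / d%:R).
  by move=> i; apply: bigmax_ge => j _; rewrite divr_ge0 // ltW.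
have [o0 o1] := bigmax_ge (P := xpredT)
     (F := fun i => \big[Num.max/0]_(j < M | i != j) (sn i j / d%:R))
     (fun i _ => (hinner i).1).
split => // i j hij v.
have h1 : sn i j <= d%:R * \big[Num.max/0]_(i < M) \big[Num.max/0]_(j < M | i != j) (sn i j / d%:R).
  rewrite mulrC -ler_pdivrMr //.
  by apply: le_trans ((hinner i).2 j hij) _; apply: o1.
rewrite mulmxA; apply: le_trans ((hsn i j).1 v) _.
by apply: ler_wpM2r => //; apply: norm2_ge0.
Qed.

End Facts.

Section Run.
Variable C : numClosedFieldType.
Variables (L M d k : nat) (D : bdict C L M d) (y : 'cV[C]_L).
Variables (sel : nat -> 'I_M) (xs : nat -> bvec C M d).
Hypothesis hrun : BOMP_run D y k sel xs.

Lemma run_step l : (l < k)%N ->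
  (forall i, norm2 (adj (D i) *m (y - bmul D (xs l))) <= norm2 (adj (D (sel l)) *m (y - bmul D (xs l)))) /\
  bsupp (xs l.+1) \subset chosen sel l.+1 /\
  (forall z : bvec C M d, bsupp z \subset chosen sel l.+1 ->
       norm2 (y - bmul D (xs l.+1)) <= norm2 (y - bmul D z)).
Proof. by move=> hl; have := hrun.2 l hl. Qed.

Lemma run_supp l : (l <= k)%N -> bsupp (xs l) \subset chosen sel l.
Proof.
case: l => [_|l hl]; last by have [_ [h _]] := run_step hl.
by apply/subsetP => i; rewrite inE hrun.1 eqxx.
Qed.

Lemma run_orth_e l : (l < k)%N -> forall e : bvec C M d, bsupp e \subset chosen sel l.+1 ->
  dot (bmul D e) (y - bmul D (xs l.+1)) = 0.
Proof.
move=> hl e he; have [_ [hs hmin]] := run_step hl.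
apply: LSorth => t.
have hz : bsupp (fun j => xs l.+1 j - t *: e j) \subset chosen sel l.+1.
  apply/subsetP => i; rewrite inE; apply: contraR => hi.
  have h1 : xs l.+1 i = 0.
    by apply/eqP; apply: contraR hi => hi; apply: (subsetP hs); rewrite inE.
  have h2 : e i = 0.
    by apply/eqP; apply: contraR hi => hi; apply: (subsetP he); rewrite inE.
  by rewrite h1 h2 scaler0 subr0.
apply: le_trans (hmin _ hz) _.
rewrite bmulB bmulZ opprB addrCA addrC //.
Qed.

Lemma run_orth_i l : (l <= k)%N -> forall i, i \in chosen sel l ->
  adj (D i) *m (y - bmul D (xs l)) = 0.
Proof.
case: l => [_ i|l hl i hi]; first by rewrite chosen0 inE.
set r := y - bmul D (xs l.+1).
set v := adj (D i) *m r.
have he : bsupp (fun j => if j == i then v else 0) \subset chosen sel l.+1.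
  apply/subsetP => j; rewrite inE /=; case: (eqVneq j i) => [->//|_]; by rewrite eqxx.
have := run_orth_e hl he; rewrite bmul1 -/r -dot_adj -/v dotnn.
exact: norm2sq_eq0.
Qed.

End Run.

Lemma alg_id (R : comNzRingType) (A cm um ne : R) (k : nat) : (0 < k)%N ->
  A * um - (cm * ((k%:R - 1) * um) + ne) - (cm * (k%:R * um) + ne) =
  (A - (2 * k - 1)%N%:R * cm) * um - (ne + ne).
Proof.
move=> hk.
have -> : (2 * k - 1)%N%:R = (k%:R - 1) + k%:R :> R.
  by rewrite mul2n -addnn natrB ?natrD; [rewrite addrAC | rewrite addn_gt0 hk].
rewrite [cm * (_ * um)]mulrCA [(A - _) * um]mulrBl -[(_ * cm) * um]mulrA.
by rewrite -addrA -opprD addrACA [cm * ((k%:R - 1) * um)]mulrCA -mulrDl opprD addrA.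
Qed.

Section Main.
Variable C : numClosedFieldType.
Variables (L M d k : nat) (D : bdict C L M d) (x : bvec C M d) (w y : 'cV[C]_L).
Variables (eps mu xmin : C).
Hypothesis hd : (0 < d)%N.
Hypothesis hcols : forall (l : 'I_M) (j : 'I_d), norm2 (col j (D l)) = 1.
Hypothesis hsparse : (#|bsupp x| <= k)%N.
Hypothesis hx0 : exists i, x i != 0.
Hypothesis hy : y = bmul D x + w.
Hypothesis heps : 0 < eps.
Hypothesis hw : norm2 w <= eps.
Hypothesis hmu : is_block_coherence D mu.
Hypothesis hxmin : is_min_block_norm x xmin.
Hypothesis hcond : (1 - (d - 1)%N%:R * subcoherence D) * xmin >
           2 * eps * sqrtC (1 + (d - 1)%N%:R * subcoherence D)
           + (2 * k - 1)%N%:R * d%:R * mu * xmin.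
Variables (sel : nat -> 'I_M) (xs : nat -> bvec C M d).
Hypothesis hrun : BOMP_run D y k sel xs.

Local Notation nu := (subcoherence D).
Local Notation S := (bsupp x).
Local Notation nn := (sqrtC (1 + (d - 1)%N%:R * nu)).
Local Notation A0 := (1 - (d - 1)%N%:R * nu).
Local Notation cm := (d%:R * mu).

Lemma k_gt0 : (0 < k)%N.
Proof.
have [i hi] := hx0; apply: leq_trans hsparse; rewrite card_gt0.
by apply/set0Pn; exists i; rewrite inE.
Qed.

Lemma xmin_gt0 : 0 < xmin.
Proof.
have [[i hi ->] _] := hxmin; rewrite lt_def norm2_ge0 andbT.
by apply/eqP => /norm2_eq0 h; move: hi; rewrite inE h eqxx.
Qed.

Lemma mu_ge0 : 0 <= mu. Proof. exact: (mu_facts hd hmu).1. Qed.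
Lemma cm_ge0 : 0 <= cm. Proof. by rewrite mulr_ge0 // mu_ge0. Qed.
Lemma nn_ge0' : 0 <= nn. Proof. by rewrite sqrtC_ge0 (nn_ge0 D). Qed.

Lemma c_facts : 0 < A0 - (2 * k - 1)%N%:R * cm /\
   2 * eps * nn < (A0 - (2 * k - 1)%N%:R * cm) * xmin.
Proof.
have h : 2 * eps * nn < (A0 - (2 * k - 1)%N%:R * cm) * xmin.
  rewrite mulrBl ltrBrDr [(_ * cm)]mulrA; exact: hcond.
split => //.
have h0 : 0 <= 2 * eps * nn by apply: mulr_ge0; [apply: mulr_ge0; [exact: ler0n|exact: ltW]|exact: nn_ge0'].
by have := le_lt_trans h0 h; rewrite pmulr_lgt0 // xmin_gt0.
Qed.

Lemma select l : (l < k)%N -> chosen sel l \subset S ->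
  forall j0, j0 \in S -> j0 \notin chosen sel l ->
  sel l \in S /\ sel l \notin chosen sel l.
Proof.
move=> hl hT j0 hj0S hj0T.
set T := chosen sel l.
set r := y - bmul D (xs l).
set u : bvec C M d := bsub x (xs l).
have hsupp : bsupp (xs l) \subset T := run_supp hrun (ltnW hl).
have hxs0 : forall j, j \notin T -> xs l j = 0.
  by move=> j hj; apply/eqP; apply: contraR hj => hj; apply: (subsetP hsupp); rewrite inE.
have hxS : forall j, j \notin S -> x j = 0.
  by move=> j; rewrite inE negbK => /eqP.
have hu0 : forall j, j \notin S -> u j = 0.
  move=> j hj; rewrite /u /bsub hxS // hxs0 ?subr0 //.
  by apply: contra hj; apply: (subsetP hT).
have hr : r = bmul D u + w.
  by rewrite /r hy /u /bsub bmulB addrAC.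
have [i0 hi0S hmax] := argmax (A := S) (f := fun j => norm2 (u j)) hj0S (fun j => norm2_ge0 _).
set um := norm2 (u i0).
have hall : forall j, norm2 (u j) <= um.
  move=> j; case: (boolP (j \in S)) => [/hmax //|/hu0 ->].
  by rewrite norm2_0 norm2_ge0.
have hum : xmin <= um.
  apply: le_trans (hxmin.2 j0 hj0S) _.
  have -> : x j0 = u j0 by rewrite /u /bsub hxs0 // subr0.
  exact: hall.
have um_pos : 0 < um := lt_le_trans xmin_gt0 hum.
have hsum : \sum_j norm2 (u j) <= k%:R * um.
  rewrite (bigID (mem S)) /= [X in _ + X]big1 ?addr0; last first.
    by move=> j hj; rewrite hu0 // norm2_0.
  apply: le_trans (ler_sum _ (fun j _ => hall j)) _.
  rewrite sumr_const -[X in X <= _]mulr_natl; apply: ler_wpM2r; first exact: ltW.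
  by rewrite ler_nat.
have hsum' : \sum_(j | j != i0) norm2 (u j) <= (k%:R - 1) * um.
  move: hsum; rewrite (bigD1 i0) //= -/um mulrBl mul1r lerBrDl.
  by rewrite addrC.
have hmuf := (mu_facts hd hmu).2.
have hout : forall i, i \notin S -> norm2 (adj (D i) *m r) <= cm * (k%:R * um) + nn * eps.
  move=> i hi; set v := adj (D i) *m r.
  have e1 : norm2sq v = dot (D i *m v) r by rewrite -dotnn {2}/v dot_adj.
  have e2 : dot (D i *m v) r =
      \sum_j dot v (adj (D i) *m (D j *m u j)) + dot (D i *m v) w.
    rewrite {1}hr dotDr /bmul dot_sumr; congr (_ + _); apply: eq_bigr => j _.
    by rewrite dot_adj.
  have b1 : forall j, `|dot v (adj (D i) *m (D j *m u j))| <= norm2 v * (cm * norm2 (u j)).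
    move=> j; apply: le_trans (CSdot _ _) _; apply: ler_wpM2l; first exact: norm2_ge0.
    case: (eqVneq i j) => [<-|hij]; first by rewrite hu0 // !mulmx0 norm2_0 mulr0.
    exact: hmuf.
  have b2 : `|dot (D i *m v) w| <= norm2 v * (nn * eps).
    apply: le_trans (CSdot _ _) _; rewrite [X in _ <= X]mulrCA [X in _ <= X]mulrA.
    apply: ler_pM; [exact: norm2_ge0 | exact: norm2_ge0 | | exact: hw].
    exact: norm_up.
  have : norm2 v ^+ 2 <= norm2 v * (cm * (k%:R * um) + nn * eps).
    rewrite norm2_sq -(ger0_norm (norm2sq_ge0 v)) e1 e2.
    apply: le_trans (ler_normD _ _) _.
    rewrite mulrDr; apply: lerD; last exact: b2.
    apply: le_trans (ler_norm_sum _ _ _) _.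
    apply: le_trans (ler_sum _ (fun j _ => b1 j)) _.
    rewrite -mulr_sumr; apply: ler_wpM2l; first exact: norm2_ge0.
    rewrite -mulr_sumr; apply: ler_wpM2l; first exact: cm_ge0.
    exact: hsum.
  have hB : 0 <= cm * (k%:R * um) + nn * eps.
    apply: addr_ge0; apply: mulr_ge0; [exact: cm_ge0| |exact: nn_ge0'|exact: ltW].
    by apply: mulr_ge0; [exact: ler0n|exact: ltW].
  have [->//|nz] := eqVneq (norm2 v) 0.
  have vpos : 0 < norm2 v by rewrite lt_def nz norm2_ge0.
  by rewrite expr2 ler_pM2l.
have hin : cm * (k%:R * um) + nn * eps < norm2 (adj (D i0) *m r).
  set v := adj (D i0) *m r; set a := u i0.
  have e1 : dot a v = dot (D i0 *m a) r by rewrite /v dot_adj.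
  have e2 : dot (D i0 *m a) r = norm2sq (D i0 *m a) +
      (\sum_(j | j != i0) dot a (adj (D i0) *m (D j *m u j)) + dot (D i0 *m a) w).
    rewrite {1}hr dotDr /bmul dot_sumr (bigD1 i0) //= dotnn addrA; congr (_ + _ + _).
    by apply: eq_bigr => j _; rewrite dot_adj.
  have b1 : forall j, j != i0 -> `|dot a (adj (D i0) *m (D j *m u j))| <= um * (cm * norm2 (u j)).
    move=> j hj; apply: le_trans (CSdot _ _) _; apply: ler_wpM2l; first exact: norm2_ge0.
    by apply: hmuf; rewrite eq_sym.
  have b2 : `|dot (D i0 *m a) w| <= um * (nn * eps).
    apply: le_trans (CSdot _ _) _; rewrite [X in _ <= X]mulrCA [X in _ <= X]mulrA.
    apply: ler_pM; [exact: norm2_ge0 | exact: norm2_ge0 | | exact: hw].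
    exact: norm_up.
  have bR : `|\sum_(j | j != i0) dot a (adj (D i0) *m (D j *m u j)) + dot (D i0 *m a) w|
      <= um * (cm * ((k%:R - 1) * um) + nn * eps).
    apply: le_trans (ler_normD _ _) _.
    rewrite mulrDr; apply: lerD; last exact: b2.
    apply: le_trans (ler_norm_sum _ _ _) _.
    apply: le_trans (ler_sum _ b1) _.
    rewrite -mulr_sumr; apply: ler_wpM2l; first exact: norm2_ge0.
    rewrite -mulr_sumr; apply: ler_wpM2l; first exact: cm_ge0.
    exact: hsum'.
  have lo : A0 * um ^+ 2 <= norm2sq (D i0 *m a).
    by rewrite /um norm2_sq; apply: gersh_lo.
  have up : `|dot a v| <= um * norm2 v by apply: CSdot.
  have key : um * (A0 * um - (cm * ((k%:R - 1) * um) + nn * eps)) <= um * norm2 v.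
    apply: le_trans up; rewrite e1 e2.
    apply: le_trans (lerB_normD _ _).
    rewrite ger0_norm ?norm2sq_ge0 // mulrBr; apply: lerB => //.
    by rewrite mulrCA -expr2.
  rewrite ler_pM2l // in key.
  apply: lt_le_trans key.
  rewrite -subr_gt0 alg_id; last exact: k_gt0.
  rewrite subr_gt0.
  have [cpos cx] := c_facts.
  have -> : nn * eps + nn * eps = 2 * eps * nn.
    by rewrite -mulrA (mulr_natl _ 2) mulr2n (mulrC eps).
  apply: lt_le_trans cx _.
  by apply: ler_wpM2l; [exact: ltW|exact: hum].
have hs := (run_step hrun hl).1 i0.
have hB : 0 <= cm * (k%:R * um) + nn * eps.
  apply: addr_ge0; apply: mulr_ge0; [exact: cm_ge0| |exact: nn_ge0'|exact: ltW].
  by apply: mulr_ge0; [exact: ler0n|exact: ltW].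
split.
  apply/negPn/negP => hn.
  have := lt_le_trans hin (le_trans hs (hout _ hn)).
  by rewrite ltxx.
apply/negP => hn.
have := run_orth_i hrun (ltnW hl) hn; rewrite -/r => h0.
move: hs; rewrite h0 norm2_0 => hs.
have := lt_le_trans (le_lt_trans hB hin) hs.
by rewrite ltxx.
Qed.

Lemma induct l : (l <= k)%N ->
  S \subset chosen sel l \/ (chosen sel l \subset S /\ #|chosen sel l| = l).
Proof.
elim: l => [_|l IH hl].
  by right; rewrite chosen0 sub0set cards0.
have [h|[hT hc]] := IH (ltnW hl).
  by left; apply: subset_trans h (chosen_mono _ (leqnSn l)).
case: (boolP (S \subset chosen sel l)) => hST.
  by left; apply: subset_trans hST (chosen_mono _ (leqnSn l)).
have [j0 hj0S hj0T] : exists2 j0, j0 \in S & j0 \notin chosen sel l.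
  by move/subsetPn: hST => [j0 h1 h2]; exists j0.
have [s1 s2] := select hl hT hj0S hj0T.
right; rewrite chosenS; split.
  by rewrite subUset sub1set s1 hT.
by rewrite cardsU1 s2 hc.
Qed.

Lemma recover : S \subset chosen sel k.
Proof.
have [//|[hT hc]] := induct (leqnn k).
have [_ e] := subset_leqif_cards hT.
have : chosen sel k == S by rewrite -e hc eqn_leq hsparse -{1}hc subset_leq_card.
by move/eqP => ->.
Qed.

Lemma multi (T : {set 'I_M}) (e : bvec C M d) : (#|T| <= k)%N -> bsupp e \subset T ->
  (A0 - (k%:R - 1) * cm) * bnorm2sq e <= norm2sq (bmul D e).
Proof.
move=> hTk he.
have he0 : forall i, i \notin T -> e i = 0.
  by move=> i hi; apply/eqP; apply: contraR hi => hi; apply: (subsetP he); rewrite inE.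
have hmuf := (mu_facts hd hmu).2.
set Diag := \sum_i norm2sq (D i *m e i).
set Off := \sum_i \sum_(j | j != i) dot (D i *m e i) (D j *m e j).
have eD : norm2sq (bmul D e) = Diag + Off.
  rewrite -dotnn /bmul dot_suml /Diag /Off -big_split; apply: eq_bigr => i _.
  by rewrite dot_sumr (bigD1 i) //= dotnn.
have hb : bnorm2sq e = \sum_i norm2 (e i) ^+ 2.
  by apply: eq_bigr => i _; rewrite norm2_sq.
have hDiag : A0 * bnorm2sq e <= Diag.
  rewrite /bnorm2sq mulr_sumr; apply: ler_sum => i _; exact: gersh_lo.
have Diag0 : 0 <= Diag by apply: sumr_ge0 => i _; apply: norm2sq_ge0.
have hOff : `|Off| <= cm * ((k%:R - 1) * bnorm2sq e).
  apply: le_trans (ler_norm_sum _ _ _) _.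
  have hstep : \sum_i `|\sum_(j | j != i) dot (D i *m e i) (D j *m e j)| <=
      \sum_i \sum_(j | j != i) norm2 (e i) * (cm * norm2 (e j)).
    apply: ler_sum => i _; apply: le_trans (ler_norm_sum _ _ _) _.
    apply: ler_sum => j hj; rewrite -dot_adj.
    apply: le_trans (CSdot _ _) _; apply: ler_wpM2l; first exact: norm2_ge0.
    by apply: hmuf; rewrite eq_sym.
  apply: le_trans hstep _.
  have -> : \sum_i \sum_(j | j != i) norm2 (e i) * (cm * norm2 (e j)) =
     cm * \sum_i \sum_(j | j != i) norm2 (e i) * norm2 (e j).
    rewrite mulr_sumr; apply: eq_bigr => i _; rewrite mulr_sumr; apply: eq_bigr => j _.
    by rewrite mulrCA.
  apply: ler_wpM2l; first exact: cm_ge0.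
  apply: le_trans (offdiag (A := T) (p := fun i => norm2 (e i)) (fun i => norm2_ge0 _) _) _.
    by move=> i hi; rewrite he0 // norm2_0.
  rewrite hb; apply: ler_wpM2r; first by apply: sumr_ge0 => i _; apply: exprn_ge0; apply: norm2_ge0.
  by apply: lerB => //; rewrite ler_nat.
have hr : Off \is Num.real.
  have -> : Off = norm2sq (bmul D e) - Diag by rewrite eD addrC addKr.
  by rewrite rpredB // ger0_real // norm2sq_ge0.
have := real_lerNnormlW hr hOff => hO.
rewrite eD mulrBl; apply: lerD => //.
by rewrite -mulrA mulrCA.
Qed.

Lemma final_bound : bnorm2sq (bsub (xs k) x) <=
      eps ^+ 2 / (1 - (d - 1)%N%:R * subcoherence D - (k - 1)%N%:R * d%:R * mu).
Proof.
have hk := k_gt0.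
set T := chosen sel k.
set e := bsub (xs k) x.
have hS : S \subset T := recover.
have hsk : bsupp (xs k) \subset T := run_supp hrun (leqnn k).
have he : bsupp e \subset T.
  apply/subsetP => i; rewrite inE /e /bsub; apply: contraR => hi.
  have h1 : xs k i = 0.
    by apply/eqP; apply: contraR hi => hi; apply: (subsetP hsk); rewrite inE.
  have h2 : x i = 0.
    by apply/eqP; apply: contraR hi => hi; apply: (subsetP hS); rewrite inE.
  by rewrite h1 h2 subr0.
set r := y - bmul D (xs k).
have horth : dot (bmul D e) r = 0.
  have hl : (k.-1 < k)%N by rewrite ltn_predL.
  by have := run_orth_e hrun hl (e := e); rewrite prednK //; apply.
have hwr : w = r + bmul D e.
  by rewrite /r /e /bsub bmulB addrA subrK hy addrAC subrr add0r.
have hn : norm2sq w = norm2sq r + norm2sq (bmul D e).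
  rewrite -!dotnn hwr dotDl (dotDr r) (dotDr (bmul D e)) horth (dotC (bmul D e) r) horth rmorph0 addr0 add0r //.
have hw2 : norm2sq w <= eps ^+ 2.
  by rewrite -norm2_sq ler_sqr ?nnegrE ?norm2_ge0 ?(ltW heps).
have hDe : norm2sq (bmul D e) <= eps ^+ 2.
  apply: le_trans hw2; rewrite hn lerDr; exact: norm2sq_ge0.
have hlam : 1 - (d - 1)%N%:R * subcoherence D - (k - 1)%N%:R * d%:R * mu = A0 - (k%:R - 1) * cm.
  by rewrite (natrB _ hk) mulrA.
have [cpos _] := c_facts.
have lampos : 0 < A0 - (k%:R - 1) * cm.
  apply: lt_le_trans cpos _; apply: lerB => //; apply: ler_wpM2r; first exact: cm_ge0.
  rewrite -(natrB C hk) ler_nat; apply: leq_sub2r; rewrite mul2n -addnn; exact: leq_addr.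
rewrite hlam ler_pdivlMr // mulrC.
apply: le_trans hDe.
by apply: (multi (T := T)); [exact: chosen_card | exact: he].
Qed.

End Main.

Unset Implicit Arguments. Set Strict Implicit. Set Printing Implicit Defensive.

Theorem theorem2 (C : numClosedFieldType) (L M d k : nat)
  (D : bdict C L M d) (x : bvec C M d) (w y : 'cV[C]_L)
  (eps mu xmin : C)
  (hd : (0 < d)%N)
  (hL : (L < M * d)%N)
  (hcols : forall (l : 'I_M) (j : 'I_d), norm2 (col j (D l)) = 1)
  (hrank : forall I : {set 'I_M}, (#|I| <= k)%N ->
     forall z : bvec C M d, bsupp z \subset I -> bmul D z = 0 ->
     forall i, z i = 0)
  (hsparse : (#|bsupp x| <= k)%N)
  (hx0 : exists i, x i != 0)
  (hy : y = bmul D x + w)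
  (heps : 0 < eps)
  (hw : norm2 w <= eps)
  (hmu : is_block_coherence D mu)
  (hxmin : is_min_block_norm x xmin)
  (hcond : (1 - (d - 1)%N%:R * subcoherence D) * xmin >
           2 * eps * sqrtC (1 + (d - 1)%N%:R * subcoherence D)
           + (2 * k - 1)%N%:R * d%:R * mu * xmin) :
  forall (sel : nat -> 'I_M) (xs : nat -> bvec C M d),
    BOMP_run D y k sel xs ->
    bsupp x \subset chosen sel k /\
    bnorm2sq (bsub (xs k) x) <=
      eps ^+ 2 / (1 - (d - 1)%N%:R * subcoherence D - (k - 1)%N%:R * d%:R * mu).
Proof.
move=> sel xs hrun; split.
  exact: (recover hd hcols hsparse hx0 hy heps hw hmu hxmin hcond hrun).
exact: (final_bound hd hcols hsparse hx0 hy heps hw hmu hxmin hcond hrun).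
Qed.
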